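(* Let $A_1,A_2\in\mathbb{S}^n$ be such that there is no permutation matrix $\Pi\in\mathrm{Sym}(n)$ with $A_1=\Pi A_2\Pi^T$. Then there exists $P\in\mathbb{S}^n$ such that $\Theta_P(A_1)\neq\Theta_P(A_2)$.
   Context: $\mathbb{S}^n$ denotes the space of real symmetric $n\times n$ matrices (adjacency matrices of weighted graphs on $n$ nodes, with diagonal entries as node weights). $\mathrm{Sym}(n)$ denotes the group of $n\times n$ permutation matrices. For $P\in\mathbb{S}^n$, $\Theta_P(A)=\max_{\Pi\in\mathrm{Sym}(n)}\mathrm{tr}(P\Pi A\Pi^T)$. *)

(* Defs.v *)
From HB Require Import structures.
From mathcomp Require Import all_boot all_order all_algebra all_fingroup.
Set Implicit Arguments. Unset Strict Implicit. Unset Printing Implicit Defensive.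
Import Order.TTheory GRing.Theory Num.Theory.
Local Open Scope ring_scope.

Definition symmx_prop (R : realFieldType) (n : nat) (A : 'M[R]_n) : Prop := A^T = A.

Definition pconj (R : realFieldType) (n : nat) (s : 'S_n) (A : 'M[R]_n) : 'M[R]_n :=
  perm_mx s *m A *m (perm_mx s)^T.

(* The maximum is taken over the (nonempty) finite set 'S_n; the seed of the
   fold is the value at the identity permutation, which is itself one of the
   terms, so this is exactly the maximum. *)
Definition Theta (R : realFieldType) (n : nat) (P A : 'M[R]_n) : R :=
  \big[Num.max/(\tr (P *m A))]_(s : 'S_n) \tr (P *m pconj s A).

(* Main.v *)
Require Import Defs.
From HB Require Import structures.
From mathcomp Require Import all_boot all_order all_algebra all_fingroup.
Import Order.TTheory GRing.Theory Num.Theory.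
Local Open Scope ring_scope.
Set Implicit Arguments. Unset Strict Implicit.

Section Aux.
Variables (R : realFieldType) (n : nat).
Implicit Types (X Y P A : 'M[R]_n).

Lemma sq_ge0 X : symmx_prop X -> 0 <= \tr (X *m X) /\ (\tr (X *m X) = 0 -> X = 0).
Proof.
move=> hX.
have hs : forall i j, X j i = X i j.
  by move=> i j; have := congr1 (fun M : 'M[R]_n => M i j) hX; rewrite mxE.
have e : \tr (X *m X) = \sum_i \sum_j X i j * X i j.
  rewrite /mxtrace; apply: eq_bigr => i _; rewrite mxE.
  by apply: eq_bigr => j _; rewrite hs.
rewrite e; split.
  by apply: sumr_ge0 => i _; apply: sumr_ge0 => j _; rewrite -expr2 sqr_ge0.
move=> h0; apply/matrixP => i j; rewrite mxE.
have sq : forall i j, 0 <= X i j * X i j by move=> i' j'; rewrite -expr2 sqr_ge0.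
have h1 := @psumr_eq0P _ _ xpredT (fun i => \sum_j X i j * X i j)
  (fun i _ => sumr_ge0 _ (fun j _ => sq i j)) h0 i isT.
have h3 := @psumr_eq0P _ _ xpredT (fun j => X i j * X i j) (fun j _ => sq i j) h1 j isT.
by move/eqP: h3; rewrite mulf_eq0 orbb => /eqP.
Qed.

Lemma expand X Y : \tr ((X - Y) *m (X - Y)) =
  \tr (X *m X) + \tr (Y *m Y) - (\tr (X *m Y) + \tr (X *m Y)).
Proof.
rewrite mulmxBl !mulmxBr !raddfB /=.
rewrite [\tr (Y *m X)]mxtrace_mulC.
set a := \tr (X *m X); set b := \tr (Y *m Y); set c := \tr (X *m Y).
by rewrite opprK opprD !addrA [a + b - c]addrAC addrAC.
Qed.


Lemma ip_le X Y : symmx_prop X -> symmx_prop Y ->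
  \tr (X *m Y) + \tr (X *m Y) <= \tr (X *m X) + \tr (Y *m Y).
Proof.
move=> hX hY.
have hD : symmx_prop (X - Y) by rewrite /symmx_prop linearB /= hX hY.
have [h _] := sq_ge0 hD; move: h; rewrite expand.
by rewrite subr_ge0.
Qed.

Lemma pconj_sym s A : symmx_prop A -> symmx_prop (pconj s A).
Proof. by move=> hA; rewrite /symmx_prop /pconj !trmx_mul trmxK hA mulmxA. Qed.

Lemma pconj_sq s A : \tr (pconj s A *m pconj s A) = \tr (A *m A).
Proof.
rewrite /pconj tr_perm_mx.
have e : perm_mx s^-1 *m perm_mx s = 1%:M :> 'M[R]_n by rewrite -perm_mxM mulVg perm_mx1.
rewrite -!mulmxA (mulmxA (perm_mx s^-1)) e mul1mx.
by rewrite mxtrace_mulC -!mulmxA e mulmx1.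
Qed.

Lemma Theta_ub P A M : (forall s, \tr (P *m pconj s A) <= M) -> Theta P A <= M.
Proof.
move=> h; rewrite /Theta.
have h0 : \tr (P *m A) <= M.
  by have := h 1%g; rewrite /pconj perm_mx1 mul1mx trmx1 mulmx1.
elim/big_rec: _ => // i x _ hx; by rewrite ge_max h hx.
Qed.

Lemma Theta_att P A : exists s, Theta P A = \tr (P *m pconj s A).
Proof.
rewrite /Theta.
elim/big_rec: _ => [|i x _ [s hs]].
  by exists 1%g; rewrite /pconj perm_mx1 mul1mx trmx1 mulmx1.
case: (leP (\tr (P *m pconj i A)) x) => hle.
  by exists s.
by exists i.
Qed.

Lemma Theta_self P : symmx_prop P -> Theta P P = \tr (P *m P).
Proof.
move=> hP; apply/le_anti; apply/andP; split.
  apply: Theta_ub => s.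
  have := ip_le hP (pconj_sym s hP); rewrite pconj_sq.
  by rewrite -!mulr2n ler_pMn2r.
rewrite /Theta; elim/big_rec: _ => // i x _ hx.
by rewrite le_max hx orbT.
Qed.

End Aux.

Theorem lemma1 (R : realFieldType) (n : nat) (A1 A2 : 'M[R]_n) :
  symmx_prop A1 -> symmx_prop A2 ->
  (forall s : 'S_n, A1 <> pconj s A2) ->
  exists P : 'M[R]_n, symmx_prop P /\ Theta P A1 <> Theta P A2.
Proof.
move=> h1 h2 hne.
case: (eqVneq (Theta A1 A1) (Theta A1 A2)) => [e1|ne]; last first.
  by exists A1; split => //; apply/eqP.
case: (eqVneq (Theta A2 A2) (Theta A2 A1)) => [e2|ne]; last first.
  by exists A2; split => //; apply/eqP; rewrite eq_sym.
exfalso.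
have [s hs] := Theta_att A1 A2; have [t ht] := Theta_att A2 A1.
rewrite Theta_self // hs in e1; rewrite Theta_self // ht in e2.
have i1 := ip_le h1 (pconj_sym s h2).
rewrite pconj_sq -e1 lerD2l in i1.
have i2 := ip_le h2 (pconj_sym t h1).
rewrite pconj_sq -e2 lerD2l in i2.
have eab : \tr (A1 *m A1) = \tr (A2 *m A2).
  by apply: le_anti; rewrite i1 i2.
apply: (hne s); apply/eqP; rewrite -subr_eq0; apply/eqP.
have hD : symmx_prop (A1 - pconj s A2).
  by rewrite /symmx_prop linearB /= h1 (pconj_sym s h2).
have [_ hz] := sq_ge0 hD; apply: hz.
rewrite expand pconj_sq -e1 -eab.
exact: subrr.
Qed.
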